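(* Let $g\colon\mathbb{S}^1\to\mathbb{S}^1$ be an orientation-preserving $L$-bi-Lipschitz homeomorphism (with respect to $\sigma$), and let $\psi\colon Z_2\to Z_2$ be the map obtained from its radial extension as in the context. Then $\psi$ is $L$-bi-Lipschitz with respect to $\sigma$.
   Context: Let $\mathbb{S}^2\subset\mathbb{R}^3$ be the unit sphere with great-circle distance $\sigma$, $\mathbb{S}^1$ the equator, $Z_2$ the open northern hemisphere ($(0,0,1)\in Z_2$). Let $P(x_1,x_2,x_3)=(x_1,x_2)/(1+x_3)$ be the stereographic projection from the south pole $(0,0,-1)$ onto $\mathbb{R}^2$; it fixes $\mathbb{S}^1$ (identified with the unit circle) and maps $Z_2$ onto the open unit disk. Set $\widetilde g=P\circ g\circ P^{-1}$ on the unit circle, and let $\widetilde G\colon\mathbb{R}\to\mathbb{R}$ be a homeomorphism with $\widetilde g(e^{i\theta})=e^{i\widetilde G(\theta)}$. The radial extension is $\widetilde\psi(re^{i\theta})=re^{i\widetilde G(\theta)}$ for $0\le r\le1$, and $\psi=P^{-1}\circ\widetilde\psi\circ P|_{Z_2}$. *)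

(* Defs.v *)
From Stdlib Require Import Reals Lra.
Open Scope R_scope.

Definition pt3 : Type := (R * R * R)%type.

Definition px (p : pt3) : R := fst (fst p).
Definition py (p : pt3) : R := snd (fst p).
Definition pz (p : pt3) : R := snd p.

Definition dot3 (p q : pt3) : R := px p * px q + py p * py q + pz p * pz q.

Definition on_S2 (p : pt3) : Prop := dot3 p p = 1.
Definition on_S1 (p : pt3) : Prop := on_S2 p /\ pz p = 0.
Definition in_Z2 (p : pt3) : Prop := on_S2 p /\ 0 < pz p.

Definition gc_dist (p q : pt3) : R := acos (dot3 p q).

Definition eq_pt (t : R) : pt3 := (cos t, sin t, 0).

Definition bi_lipschitz_on (A : pt3 -> Prop) (L : R) (f : pt3 -> pt3) : Prop :=
  0 < L /\
  forall p q, A p -> A q ->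
    gc_dist p q / L <= gc_dist (f p) (f q) <= L * gc_dist p q.

(* homeomorphism of S^1 (continuity of g and its inverse follows from
   bi-Lipschitz, which is assumed separately) : bijection of S^1 *)
Definition maps_S1_onto_S1 (g : pt3 -> pt3) : Prop :=
  (forall p, on_S1 p -> on_S1 (g p)) /\
  (forall q, on_S1 q -> exists p, on_S1 p /\ g p = q) /\
  (forall p q, on_S1 p -> on_S1 q -> g p = g q -> p = q).

Definition is_lift (g : pt3 -> pt3) (G : R -> R) : Prop :=
  forall t, g (eq_pt t) = eq_pt (G t).

Definition orientation_preserving (g : pt3 -> pt3) : Prop :=
  exists F : R -> R, continuity F /\
    (forall s t, s < t -> F s < F t) /\ is_lift g F.

Definition homeo_R (G : R -> R) : Prop :=
  continuity G /\ exists H : R -> R, continuity H /\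
    (forall t, H (G t) = t) /\ (forall t, G (H t) = t).

(* inverse stereographic projection (from the south pole) R^2 -> S^2 *)
Definition Pinv (u v : R) : pt3 :=
  let n := u * u + v * v in
  (2 * u / (1 + n), 2 * v / (1 + n), (1 - n) / (1 + n)).

Definition stereo (p : pt3) : R * R :=
  (px p / (1 + pz p), py p / (1 + pz p)).

Definition radial_ext (G : R -> R) (r t : R) : R * R :=
  (r * cos (G t), r * sin (G t)).

(* psi = P^{-1} o psi~ o P, evaluated at the point of Z_2 whose
   projection is r e^{i t}, 0 <= r < 1 *)
Definition psi (G : R -> R) (r t : R) : pt3 :=
  Pinv (fst (radial_ext G r t)) (snd (radial_ext G r t)).

(* Main.v *)
Require Import Defs.
From Stdlib Require Import Reals Lra.
From Coquelicot Require Import Coquelicot.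
Open Scope R_scope.
Lemma nonincr (f f' : R -> R) a b : a <= b ->
  (forall c, a <= c <= b -> is_derive f c (f' c)) ->
  (forall c, a < c < b -> f' c <= 0) -> f b <= f a.
Proof.
  intros Hab Hd Hn. destruct (Req_dec a b) as [->|Hne]; [lra|].
  destruct (MVT_cor2 f f' a b) as [c [Hc1 Hc2]]; [lra| |].
  - intros c Hc. apply is_derive_Reals. auto.
  - assert (f' c <= 0) by (apply Hn; lra). nra.
Qed.

Lemma M1 l u v : 1 <= l -> 0 <= u <= v -> l*v <= PI/2 ->
  sin (l*v) * sin u <= sin (l*u) * sin v.
Proof.
  intros Hl Huv Hv. pose proof PI_RGT_0.
  assert (Hh : forall t, 0 <= t <= v -> l * cos (l*t) * sin t - sin (l*t) * cos t <= 0).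
  { intros t Ht.
    pose (h := fun t => l * cos (l*t) * sin t - sin (l*t) * cos t).
    assert (h t <= h 0).
    { apply (nonincr h (fun t => (1 - l*l) * sin (l*t) * sin t)); [lra| |].
      - intros c _. unfold h. auto_derive; auto. ring.
      - intros c Hc. assert (l*c <= l*v) by (apply Rmult_le_compat_l; lra).
        assert (c <= l*c) by nra.
        assert (0 <= sin (l*c)) by (apply sin_ge_0; nra).
        assert (0 <= sin c) by (apply sin_ge_0; nra).
        assert (0 <= sin (l*c) * sin c) by nra. assert (1 - l*l <= 0) by nra. nra. }
    unfold h in H0. rewrite Rmult_0_r, sin_0 in H0. lra. }
  destruct (Req_dec u 0) as [->|Hu0].
  { rewrite Rmult_0_r, sin_0. lra. }
  assert (Hs : forall t, u <= t <= v -> 0 < sin t).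
  { intros t Ht. assert (l*t <= l*v) by (apply Rmult_le_compat_l; lra).
    assert (t <= l*t) by nra. apply sin_gt_0; nra. }
  pose (phi := fun t => sin (l*t) / sin t).
  assert (phi v <= phi u).
  { apply (nonincr phi (fun t => (l * cos (l*t) * sin t - sin (l*t) * cos t) / (sin t)^2)); [lra| |].
    - intros c Hc. unfold phi. auto_derive. { specialize (Hs c Hc). lra. }
      specialize (Hs c Hc). field. lra.
    - intros c Hc. assert (0 < (sin c)^2) by (specialize (Hs c ltac:(lra)); nra).
      assert (l * cos (l*c) * sin c - sin (l*c) * cos c <= 0) by (apply Hh; lra).
      assert (0 < / (sin c)^2) by (apply Rinv_0_lt_compat; lra). unfold Rdiv. nra. }
  unfold phi in H0. pose proof (Hs u ltac:(lra)). pose proof (Hs v ltac:(lra)).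
  apply Rmult_le_compat_r with (r := sin u * sin v) in H0; [|nra].
  replace (sin (l * v) / sin v * (sin u * sin v)) with (sin (l*v) * sin u) in H0 by (field; lra).
  replace (sin (l * u) / sin u * (sin u * sin v)) with (sin (l*u) * sin v) in H0 by (field; lra).
  lra.
Qed.

Lemma M2 l u v : 1 <= l -> 0 <= v <= u -> l*u <= PI/2 ->
  cos (l*u) * cos v <= cos (l*v) * cos u.
Proof.
  intros Hl Huv Hu. pose proof PI_RGT_0.
  destruct (Req_dec l 1) as [->|Hl1].
  { rewrite !Rmult_1_l. lra. }
  assert (Hut : u < PI/2).
  { destruct (Req_dec u 0); [lra|]. assert (u < l*u) by nra. lra. }
  assert (Hc : forall t, 0 <= t <= u -> 0 < cos t) by (intros t Ht; apply cos_gt_0; lra).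
  assert (Hk : forall t, 0 <= t <= u -> - l * sin (l*t) * cos t + cos (l*t) * sin t <= 0).
  { intros t Ht.
    pose (h := fun t => - l * sin (l*t) * cos t + cos (l*t) * sin t).
    assert (h t <= h 0).
    { apply (nonincr h (fun t => (1 - l*l) * cos (l*t) * cos t)); [lra| |].
      - intros c _. unfold h. auto_derive; auto. ring.
      - intros c Hc'. assert (l*c <= l*u) by (apply Rmult_le_compat_l; lra).
        assert (0 <= cos (l*c)) by (apply cos_ge_0; nra).
        assert (0 < cos c) by (apply Hc; lra).
        assert (0 <= cos (l*c) * cos c) by nra. assert (1 - l*l <= 0) by nra. nra. }
    unfold h in H0. rewrite Rmult_0_r, sin_0 in H0. lra. }
  pose (phi := fun t => cos (l*t) / cos t).
  assert (phi u <= phi v).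
  { apply (nonincr phi (fun t => (- l * sin (l*t) * cos t + cos (l*t) * sin t) / (cos t)^2)); [lra| |].
    - intros c Hc'. unfold phi. auto_derive. { specialize (Hc c ltac:(lra)). lra. }
      specialize (Hc c ltac:(lra)). field. lra.
    - intros c Hc'. assert (0 < (cos c)^2) by (specialize (Hc c ltac:(lra)); nra).
      assert (- l * sin (l*c) * cos c + cos (l*c) * sin c <= 0) by (apply Hk; lra).
      assert (0 < / (cos c)^2) by (apply Rinv_0_lt_compat; lra). unfold Rdiv. nra. }
  unfold phi in H0. pose proof (Hc u ltac:(lra)). pose proof (Hc v ltac:(lra)).
  apply Rmult_le_compat_r with (r := cos u * cos v) in H0; [|nra].
  replace (cos (l * u) / cos u * (cos u * cos v)) with (cos (l*u) * cos v) in H0 by (field; lra).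
  replace (cos (l * v) / cos v * (cos u * cos v)) with (cos (l*v) * cos u) in H0 by (field; lra).
  lra.
Qed.
Lemma cos_le_rev x y : 0 <= x <= PI -> 0 <= y <= PI -> cos y <= cos x -> x <= y.
Proof.
  intros Hx Hy H. destruct (Rle_lt_or_eq_dec _ _ H) as [Hl|He].
  - apply Rlt_le, (cos_decreasing_0 y x); lra.
  - right. apply cos_inj; auto.
Qed.

Lemma acos_le_of_cos c T : -1 <= c <= 1 -> 0 <= T <= PI -> cos T <= c -> acos c <= T.
Proof.
  intros Hc HT H. apply cos_le_rev; [apply acos_bound|auto|]. rewrite cos_acos; auto.
Qed.

Lemma acos_mono x y : -1 <= x -> x <= y -> y <= 1 -> acos y <= acos x.
Proof.
  intros. apply acos_le_of_cos; [lra|apply acos_bound|]. rewrite cos_acos; lra.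
Qed.

Definition Fd (a b x : R) := acos (a + b * cos x).

Lemma Fd_range a b x : 0 <= b -> a + b <= 1 -> -1 <= a - b -> -1 <= a + b * cos x <= 1.
Proof. intros. pose proof (COS_bound x). nra. Qed.

Lemma Fd_mono a b x y : 0 <= b -> a + b <= 1 -> -1 <= a - b ->
  0 <= x -> x <= y -> y <= PI -> Fd a b x <= Fd a b y.
Proof.
  intros. unfold Fd. pose proof (COS_bound x). pose proof (COS_bound y).
  assert (cos y <= cos x).
  { destruct (Req_dec x y) as [->|]; [lra|]. apply Rlt_le, cos_decreasing_1; lra. }
  apply acos_mono; nra.
Qed.

Lemma Fd_ratio a b x y : 0 <= b -> a + b <= 1 -> -1 <= a - b ->
  0 < x -> x <= y -> y <= PI -> x * Fd a b y <= y * Fd a b x.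
Proof.
  intros Hb H1 H2 Hx Hxy Hy. pose proof PI_RGT_0.
  destruct (Req_dec x y) as [->|Hne]; [lra|].
  set (th := Fd a b x).
  assert (Hth : 0 <= th <= PI) by apply acos_bound.
  assert (Hcth : cos th = a + b * cos x) by (apply cos_acos, Fd_range; auto).
  set (l := y / x).
  assert (Hl : 1 < l) by (unfold l; apply Rlt_div_r; lra).
  assert (Hyl : y = l * x) by (unfold l; field; lra).
  assert (HFy : 0 <= Fd a b y <= PI) by apply acos_bound.
  destruct (Rle_lt_dec PI (l * th)) as [Hbig|Hsmall].
  { assert (x * Fd a b y <= x * (l * th)) by (apply Rmult_le_compat_l; lra).
    replace (y * th) with (x * (l * th)) by (rewrite Hyl; ring). lra. }
  assert (Fd a b y <= l * th).
  2:{ replace (y * th) with (x * (l * th)) by (rewrite Hyl; ring).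
        apply Rmult_le_compat_l; lra. }
  unfold Fd. apply acos_le_of_cos; [apply Fd_range; auto| nra |].
  assert (Hcyx : cos y < cos x) by (apply cos_decreasing_1; lra).
  set (u := th / 2). set (v := x / 2).
  replace th with (2*u) in * by (unfold u; field).
  replace x with (2*v) in * by (unfold v; field).
  assert (Hy2 : y = 2 * (l * v)) by (rewrite Hyl; ring).
  replace (l * (2*u)) with (2 * (l*u)) by ring.
  rewrite Hy2 in Hcyx |- *.
  assert (Hv : 0 < v < PI/2) by lra.
  assert (Hlv : l * v <= PI/2) by lra.
  assert (Hlu : l * u < PI/2) by lra.
  assert (0 <= u) by lra.
  assert (u <= l*u) by nra.
  assert (v <= l*v) by nra.
  destruct (Rle_lt_dec u v) as [Huv|Hvu].
  - pose proof (M1 l u v ltac:(lra) ltac:(lra) Hlv) as HM.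
    assert (0 <= sin u) by (apply sin_ge_0; lra).
    assert (0 < sin v) by (apply sin_gt_0; lra).
    assert (0 <= sin (l*v)) by (apply sin_ge_0; lra).
    assert (0 <= sin (l*u)) by (apply sin_ge_0; lra).
    assert (HM2 : (sin (l*v) * sin u)^2 <= (sin (l*u) * sin v)^2).
    { apply pow_incr. split; [nra|exact HM]. }
    rewrite !cos_2a_sin in *.
    assert (HbS : b * (sin v)^2 <= (sin u)^2) by nra.
    assert (Hsq : (sin v)^2 <= (sin (l*v))^2) by nra.
    (* goal: 1 - 2 sin(lu)^2 <= a + b (1 - 2 sin(lv)^2) *)
    assert (Hk : (sin u)^2 + b * ((sin (l*v))^2 - (sin v)^2) <= (sin (l*u))^2).
    { assert (0 < (sin v)^2) by nra.
      apply Rmult_le_reg_r with ((sin v)^2); auto.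
      assert (b * (sin v)^2 * ((sin (l*v))^2 - (sin v)^2) <= (sin u)^2 * ((sin (l*v))^2 - (sin v)^2)).
      { apply Rmult_le_compat_r; lra. }
      nra. }
    nra.
  - pose proof (M2 l u v ltac:(lra) ltac:(lra) ltac:(lra)) as HM.
    assert (0 <= cos u) by (apply cos_ge_0; lra).
    assert (0 < cos v) by (apply cos_gt_0; lra).
    assert (0 <= cos (l*v)) by (apply cos_ge_0; lra).
    assert (0 <= cos (l*u)) by (apply cos_ge_0; lra).
    assert (HM2 : (cos (l*u) * cos v)^2 <= (cos (l*v) * cos u)^2).
    { apply pow_incr. split; [nra|exact HM]. }
    rewrite !cos_2a_cos in *.
    assert (HbS : b * (cos v)^2 <= (cos u)^2) by nra.
    assert (Hsq : (cos (l*v))^2 <= (cos v)^2) by nra.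
    assert (Hk : (cos (l*u))^2 <= (cos u)^2 + b * ((cos (l*v))^2 - (cos v)^2)).
    { assert (0 < (cos v)^2) by nra.
      apply Rmult_le_reg_r with ((cos v)^2); auto.
      assert (b * (cos v)^2 * ((cos v)^2 - (cos (l*v))^2) <= (cos u)^2 * ((cos v)^2 - (cos (l*v))^2)).
      { apply Rmult_le_compat_r; lra. }
      nra. }
    nra.
Qed.
Lemma Pinv_polar r t : Pinv (r * cos t) (r * sin t) =
  (2*r/(1+r*r) * cos t, 2*r/(1+r*r) * sin t, (1-r*r)/(1+r*r)).
Proof.
  unfold Pinv.
  replace (r * cos t * (r * cos t) + r * sin t * (r * sin t)) with (r*r)
    by (pose proof (sin2_cos2 t); unfold Rsqr in *; nra).
  assert (0 < 1 + r*r) by nra.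
  apply (f_equal2 pair); [apply (f_equal2 pair)|]; field; lra.
Qed.
Lemma dot_polar r1 t1 r2 t2 :
  dot3 (Pinv (r1 * cos t1) (r1 * sin t1)) (Pinv (r2 * cos t2) (r2 * sin t2)) =
  (1-r1*r1)/(1+r1*r1) * ((1-r2*r2)/(1+r2*r2)) + 2*r1/(1+r1*r1) * (2*r2/(1+r2*r2)) * cos (t1 - t2).
Proof.
  rewrite !Pinv_polar. unfold dot3, px, py, pz; simpl. rewrite cos_minus. ring.
Qed.

Lemma U_bound a b d d' L : 0 <= b -> a + b <= 1 -> -1 <= a - b -> 1 <= L ->
  0 <= d <= PI -> 0 <= d' <= PI -> d' <= L * d -> Fd a b d' <= L * Fd a b d.
Proof.
  intros Hb H1 H2 HL Hd Hd' H.
  assert (HF : 0 <= Fd a b d) by apply acos_bound.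
  destruct (Rle_lt_dec d' d) as [Hle|Hlt].
  - pose proof (Fd_mono a b d' d Hb H1 H2 ltac:(lra) Hle ltac:(lra)). nra.
  - assert (Hd0 : 0 < d).
    { destruct (Req_dec d 0) as [E|]; [|lra]. rewrite E in H. lra. }
    pose proof (Fd_ratio a b d d' Hb H1 H2 Hd0 ltac:(lra) ltac:(lra)) as HR.
    assert (d' * Fd a b d <= (L * d) * Fd a b d) by (apply Rmult_le_compat_r; lra).
    assert (d * Fd a b d' <= d * (L * Fd a b d)) by lra.
    apply Rmult_le_reg_l with d; lra.
Qed.

Lemma final a b d d' L : 0 <= b -> a + b <= 1 -> -1 <= a - b -> 1 <= L ->
  0 <= d <= PI -> 0 <= d' <= PI -> d / L <= d' <= L * d ->
  Fd a b d / L <= Fd a b d' <= L * Fd a b d.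
Proof.
  intros Hb H1 H2 HL Hd Hd' [Hl Hu]. split.
  - assert (d <= L * d').
    { apply Rmult_le_compat_l with (r := L) in Hl; [|lra].
      replace (L * (d / L)) with d in Hl by (field; lra). lra. }
    pose proof (U_bound a b d' d L Hb H1 H2 HL Hd' Hd H).
    apply Rmult_le_reg_l with L; [lra|]. replace (L * (Fd a b d / L)) with (Fd a b d) by (field; lra). lra.
  - apply U_bound; auto.
Qed.

Lemma eq_S1 t : on_S1 (eq_pt t).
Proof.
  unfold on_S1, on_S2, dot3, eq_pt, px, py, pz; simpl. split; [|reflexivity].
  pose proof (sin2_cos2 t). unfold Rsqr in *. lra.
Qed.

Lemma gc_eq s t : gc_dist (eq_pt s) (eq_pt t) = acos (cos (s - t)).
Proof.
  unfold gc_dist, dot3, eq_pt, px, py, pz; simpl. rewrite cos_minus. f_equal. ring.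
Qed.

Lemma ab_constr r1 r2 : 0 <= r1 -> 0 <= r2 ->
  let a := (1-r1*r1)/(1+r1*r1) * ((1-r2*r2)/(1+r2*r2)) in
  let b := 2*r1/(1+r1*r1) * (2*r2/(1+r2*r2)) in
  0 <= b /\ a + b <= 1 /\ -1 <= a - b.
Proof.
  intros H1 H2 a b.
  set (c1 := (1-r1*r1)/(1+r1*r1)). set (c2 := (1-r2*r2)/(1+r2*r2)).
  set (s1 := 2*r1/(1+r1*r1)). set (s2 := 2*r2/(1+r2*r2)).
  assert (E1 : c1*c1 + s1*s1 = 1) by (unfold c1, s1; field; nra).
  assert (E2 : c2*c2 + s2*s2 = 1) by (unfold c2, s2; field; nra).
  assert (0 <= s1) by (unfold s1; apply Rmult_le_pos; [lra|apply Rlt_le, Rinv_0_lt_compat; nra]).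
  assert (0 <= s2) by (unfold s2; apply Rmult_le_pos; [lra|apply Rlt_le, Rinv_0_lt_compat; nra]).
  unfold a, b; fold c1 c2 s1 s2.
  pose proof (pow2_ge_0 (c1 - c2)). pose proof (pow2_ge_0 (s1 - s2)).
  pose proof (pow2_ge_0 (c1 + c2)).
  split; [nra|split; nra].
Qed.

Theorem lemma5 (g : pt3 -> pt3) (L : R) (G : R -> R) :
  maps_S1_onto_S1 g ->
  orientation_preserving g ->
  bi_lipschitz_on on_S1 L g ->
  homeo_R G -> is_lift g G ->
  forall r1 t1 r2 t2 : R,
    0 <= r1 < 1 -> 0 <= r2 < 1 ->
    gc_dist (Pinv (r1 * cos t1) (r1 * sin t1)) (Pinv (r2 * cos t2) (r2 * sin t2)) / L
      <= gc_dist (psi G r1 t1) (psi G r2 t2)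
      <= L * gc_dist (Pinv (r1 * cos t1) (r1 * sin t1)) (Pinv (r2 * cos t2) (r2 * sin t2)).
Proof.
  intros _ _ [HL Hbi] _ Hlift r1 t1 r2 t2 Hr1 Hr2.
  pose proof PI_RGT_0.
  assert (HL1 : 1 <= L).
  { pose proof (Hbi (eq_pt 0) (eq_pt PI) (eq_S1 _) (eq_S1 _)) as [Ha Hb].
    rewrite gc_eq in Ha, Hb.
    replace (0 - PI) with (- PI) in Ha, Hb by ring.
    rewrite cos_neg, acos_cos in Ha, Hb by lra.
    assert (PI <= L * PI * L).
    { apply Rmult_le_compat_r with (r := L) in Ha; [|lra].
      replace (PI / L * L) with PI in Ha by (field; lra).
      apply Rmult_le_compat_r with (r := L) in Hb; lra. }
    assert (1 <= L * L) by (apply Rmult_le_reg_l with PI; lra).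
    nra. }
  pose proof (Hbi (eq_pt t1) (eq_pt t2) (eq_S1 _) (eq_S1 _)) as Hb.
  rewrite !Hlift, !gc_eq in Hb.
  change (psi G r1 t1) with (Pinv (r1 * cos (G t1)) (r1 * sin (G t1))).
  change (psi G r2 t2) with (Pinv (r2 * cos (G t2)) (r2 * sin (G t2))).
  unfold gc_dist. rewrite !dot_polar.
  rewrite <- (cos_acos (cos (t1 - t2)) (COS_bound _)).
  rewrite <- (cos_acos (cos (G t1 - G t2)) (COS_bound _)).
  destruct (ab_constr r1 r2 ltac:(lra) ltac:(lra)) as [Hb0 [Hb1 Hb2]].
  apply (final _ _ _ _ L Hb0 Hb1 Hb2 HL1 (acos_bound _) (acos_bound _) Hb).
Qed.
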